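(* Let $a,b,c,p\in\mathbb{C}$ with $-c\notin\mathbb{N}\cup\{0\}$. Suppose that \[ \sinh(pz)F(a,b;c;z)=\sum_{n=0}^\infty\frac{u_n-v_n}{2}z^n,\qquad |z|<1, \] where $u_n,v_n$ are given as follows: $u_0=1$, $u_1=\frac{ab}{c}+p$, $u_2=\frac{a(1+a)b(1+b)}{2c(1+c)}+\frac{abp}{c}+\frac{p^2}{2}$, $v_0=1$, $v_1=\frac{ab}{c}-p$, $v_2=\frac{a(1+a)b(1+b)}{2c(1+c)}-\frac{abp}{c}+\frac{p^2}{2}$, and for all integers $n\ge2$, \[ u_{n+1}=\frac{(a+n)(b+n)+p(c+2n)}{(n+1)(c+n)}u_n-\frac{p(a+b+2n+p-1)}{(n+1)(c+n)}u_{n-1}+\frac{p^2}{(n+1)(c+n)}u_{n-2}, \] \[ v_{n+1}=\frac{(a+n)(b+n)-p(c+2n)}{(n+1)(c+n)}v_n+\frac{p(a+b+2n-p-1)}{(n+1)(c+n)}v_{n-1}+\frac{p^2}{(n+1)(c+n)}v_{n-2}. \] That is: with $(u_n)$ and $(v_n)$ defined by these initial values and recurrences, the displayed expansion holds.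
   Context: For $a\in\mathbb{C}$, $(a)_n=a(a+1)\cdots(a+n-1)$ denotes the Pochhammer symbol, with $(a)_0=1$. For $a,b,c\in\mathbb{C}$ with $-c\notin\mathbb{N}\cup\{0\}$, the Gaussian hypergeometric function is $F(a,b;c;z)=\sum_{n=0}^\infty \frac{(a)_n(b)_n}{(c)_n\,n!}z^n$, $|z|<1$. *)

(* Defs.v *)
From HB Require Import structures.
From mathcomp Require Import all_boot all_order all_algebra.
From mathcomp Require Import complex.
From mathcomp Require Import all_classical all_reals all_analysis.
Set Implicit Arguments. Unset Strict Implicit. Unset Printing Implicit Defensive.
Import GRing.Theory Num.Theory.
Import numFieldTopology.Exports numFieldNormedType.Exports.
Local Open Scope ring_scope.
Local Open Scope classical_set_scope.

(* Metric / normed structure on R[i] given by the complex modulus. *)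
HB.instance Definition _ (R : rcfType) := PseudoPointedMetric.copy R[i] (R[i])^o.
HB.instance Definition _ (R : rcfType) := NormedModule.copy R[i] (R[i])^o.

Section Defs.
Variable R : realType.
Local Notation C := R[i].

Definition poch (a : C) (n : nat) : C := \prod_(k < n) (a + k%:R).

Definition hyp_coef (a b c : C) (n : nat) : C :=
  poch a n * poch b n / (poch c n * (n`!)%:R).

Definition hypF (a b c z : C) : C :=
  lim (series (fun n => hyp_coef a b c n * z ^+ n) @ \oo).

Definition cexp (w : C) : C :=
  lim (series (fun n => w ^+ n / (n`!)%:R) @ \oo).
Definition csinh (w : C) : C := (cexp w - cexp (- w)) / 2.

Fixpoint useq (a b c p : C) (n : nat) {struct n} : C :=
  match n with
  | 0 => 1
  | 1 => a * b / c + p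
  | 2 => a * (1 + a) * b * (1 + b) / (2 * c * (1 + c)) + a * b * p / c + p ^+ 2 / 2
  | S ((S (S m as m1)) as m2) =>
      let N : C := m.+2%:R in
      let D := (N + 1) * (c + N) in
      ((a + N) * (b + N) + p * (c + 2 * N)) / D * useq a b c p m2
      - p * (a + b + 2 * N + p - 1) / D * useq a b c p m1
      + p ^+ 2 / D * useq a b c p m
  end.

Fixpoint vseq (a b c p : C) (n : nat) {struct n} : C :=
  match n with
  | 0 => 1
  | 1 => a * b / c - p
  | 2 => a * (1 + a) * b * (1 + b) / (2 * c * (1 + c)) - a * b * p / c + p ^+ 2 / 2
  | S ((S (S m as m1)) as m2) =>
      let N : C := m.+2%:R in
      let D := (N + 1) * (c + N) in
      ((a + N) * (b + N) - p * (c + 2 * N)) / D * vseq a b c p m2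
      + p * (a + b + 2 * N - p - 1) / D * vseq a b c p m1
      + p ^+ 2 / D * vseq a b c p m
  end.

End Defs.

(* Main.v *)
Require Import Defs.
From HB Require Import structures.
From mathcomp Require Import all_boot all_order all_algebra.
From mathcomp Require Import complex.
From mathcomp Require Import all_classical all_reals all_analysis.
From mathcomp Require Import ring lra.
Import Order.TTheory GRing.Theory Num.Theory.
Import numFieldTopology.Exports numFieldNormedType.Exports.
Local Open Scope ring_scope.
Local Open Scope classical_set_scope.
Local Open Scope complex_scope.
Local Open Scope ring_scope.
Local Notation Re := complex.Re.
Local Notation Im := complex.Im.

Section Alg.
Variable R : realType.
Local Notation C := R[i].

Definition cconv (s t : nat -> C) n := \sum_(i < n.+1) s i * t (n - i)%N.
Definition mth (s : nat -> C) n := n%:R * s n.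
Definition msh (s : nat -> C) n := if n is m.+1 then s m else 0.
Definition mee (q : C) n := q ^+ n / (n`!)%:R.

Lemma conv_th s t n : mth (cconv s t) n = cconv (mth s) t n + cconv s (mth t) n.
Proof.
rewrite /mth /cconv mulr_sumr -big_split /=; apply: eq_bigr => i _.
have -> : n%:R = i%:R + (n - i)%:R :> C by rewrite -natrD subnKC // -ltnS.
ring.
Qed.

Lemma conv_shl s t n : cconv (msh s) t n = msh (cconv s t) n.
Proof.
by case: n => [|n]; rewrite /cconv big_ord_recl /= mul0r add0r ?big_ord0.
Qed.

Lemma conv_shr s t n : cconv s (msh t) n = msh (cconv s t) n.
Proof.
case: n => [|n]; rewrite /cconv big_ord_recr /=.
  by rewrite big_ord0 mulr0 addr0.
rewrite subnn mulr0 addr0.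
apply: eq_bigr => i _ /=; rewrite subSn //; exact: (ltn_ord i).
Qed.

Lemma conv_lin s t1 t2 x y n :
  cconv s (fun m => x * t1 m + y * t2 m) n = x * cconv s t1 n + y * cconv s t2 n.
Proof.
rewrite /cconv !mulr_sumr -big_split /=; apply: eq_bigr => i _; ring.
Qed.

Lemma conv_ext s t t' n : (forall m, t m = t' m) -> cconv s t n = cconv s t' n.
Proof. by move=> h; apply: eq_bigr => i _; rewrite h. Qed.

Lemma fact_neq0 n : (n`!)%:R != 0 :> C.
Proof. by rewrite pnatr_eq0 -lt0n fact_gt0. Qed.

Lemma th_ee q n : mth (mee q) n = q * msh (mee q) n.
Proof.
case: n => [|n]; rewrite /mth /mee /= ?mul0r ?mulr0 //.
rewrite factS natrM exprS.
have h1 := fact_neq0 n.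
have h2 : n.+1%:R != 0 :> C by rewrite pnatr_eq0.
field; apply/andP; split => //.
Qed.

Lemma key q g n : cconv (mee q) (mth g) n =
  mth (cconv (mee q) g) n - q * msh (cconv (mee q) g) n.
Proof.
rewrite conv_th.
have -> : cconv (mth (mee q)) g n = q * msh (cconv (mee q) g) n.
  rewrite -conv_shl /cconv mulr_sumr; apply: eq_bigr => i _.
  by rewrite th_ee mulrA.
ring.
Qed.
End Alg.
Arguments cconv {R}. Arguments mth {R}. Arguments msh {R}. Arguments mee {R}.

Section Alg2.
Variable R : realType.
Local Notation C := R[i].
Variables (a b c : C).
Hypothesis hc : forall k : nat, c != - (k%:R).

Lemma cN0 k : c + k%:R != 0.
Proof. by rewrite addr_eq0 hc. Qed.

Lemma poch_neq0 n : poch c n != 0.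
Proof. by rewrite /poch; apply/prodf_neq0 => i _; apply: cN0. Qed.

Lemma pochS (x : C) n : poch x n.+1 = poch x n * (x + n%:R).
Proof. by rewrite /poch big_ord_recr. Qed.

Local Notation h := (hyp_coef a b c).

Lemma h_rec j : j.+1%:R * (c + j%:R) * h j.+1 = (j%:R + a) * (j%:R + b) * h j.
Proof.
rewrite /hyp_coef !pochS factS natrM.
have h1 := fact_neq0 R j.
have h2 : j.+1%:R != 0 :> C by rewrite pnatr_eq0.
have h3 := poch_neq0 j.
have h4 := cN0 j.
field. by rewrite h1 h3 h4 addrC natr1 h2.
Qed.

Lemma h_ode m : mth (mth h) m + (c - 1) * mth h m =
  msh (fun j => 1 * (1 * mth (mth h) j + (a + b) * mth h j) + (a * b) * h j) m.
Proof.
case: m => [|j]; rewrite /mth /= ?mul0r ?mulr0 ?addr0 //.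
have := h_rec j.
have -> : j.+1%:R = j%:R + 1 :> C by rewrite -natr1.
move=> E.
have -> : c - 1 = c + j%:R - (j%:R + 1) by ring.
transitivity ((j%:R + 1) * (c + j%:R) * h j.+1); first by ring.
rewrite E; ring.
Qed.

Section F.
Variable q : C.
Local Notation f := (cconv (mee q) h).

Lemma f_rec k :
  let N : C := k.+2%:R in
  (N + 1) * (c + N) * f k.+3 =
  ((a + N) * (b + N) + q * (c + 2 * N)) * f k.+2
  - q * (a + b + 2 * N + q - 1) * f k.+1 + q ^+ 2 * f k.
Proof.
move=> N.
have E : cconv (mee q) (fun m => 1 * mth (mth h) m + (c - 1) * mth h m) k.+3 =
  cconv (mee q) (msh (fun j => 1 * (1 * mth (mth h) j + (a + b) * mth h j) + (a * b) * h j)) k.+3.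
  by apply: conv_ext => m; rewrite mul1r h_ode.
rewrite conv_shr conv_lin /= conv_lin conv_lin !mul1r in E.
rewrite !key /mth /msh /= !key /mth /msh /= in E.
have e1 : (k.+1%:R : C) = k%:R + 1 by rewrite -addn1 natrD.
have e2 : (k.+2%:R : C) = k%:R + 2 by rewrite -addn2 natrD.
have e3 : (k.+3%:R : C) = k%:R + 3 by rewrite -addn3 natrD.
rewrite /N e2; rewrite e1 e2 e3 in E.
move/eqP: E; rewrite -subr_eq0 => /eqP E.
apply/eqP; rewrite -subr_eq0; apply/eqP; rewrite -E; ring.
Qed.

Lemma h0 : h 0 = 1.
Proof. by rewrite /hyp_coef /poch !big_ord0 /= !mul1r invr1. Qed.
Lemma h1 : h 1 = a * b / c.
Proof.
rewrite /hyp_coef /poch !big_ord1 /= !addr0 mulr1. done.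
Qed.
Lemma h2 : h 2 = a * (1 + a) * b * (1 + b) / (2 * c * (1 + c)).
Proof.
rewrite /hyp_coef /poch !big_ord_recr !big_ord0 /= !mul1r !addr0.
have -> : (2`!)%:R = 2 :> C by [].
rewrite (addrC a 1) (addrC b 1) (addrC c 1) /=. by rewrite [c * (1 + c) * 2]mulrC !mulrA.
Qed.

Lemma ee0 : mee q 0 = 1.
Proof. by rewrite /mee expr0 divr1. Qed.
Lemma ee1 : mee q 1 = q.
Proof. by rewrite /mee expr1 divr1. Qed.
Lemma ee2 : mee q 2 = q ^+ 2 / 2.
Proof. by []. Qed.

Lemma f0 : f 0 = 1.
Proof. by rewrite /cconv big_ord1 /= ee0 h0 mulr1. Qed.
Lemma f1 : f 1 = a * b / c + q.
Proof. rewrite /cconv !big_ord_recr big_ord0 /= add0r ee0 ee1 h0 h1. ring. Qed.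
Lemma f2 : f 2 = a * (1 + a) * b * (1 + b) / (2 * c * (1 + c)) + a * b * q / c + q ^+ 2 / 2.
Proof. rewrite /cconv !big_ord_recr big_ord0 /= add0r ee0 ee1 ee2 h0 h1 h2. ring. Qed.

End F.

Lemma useqS p k : let N : C := k.+2%:R in let D := (N + 1) * (c + N) in
  useq a b c p k.+3 =
      ((a + N) * (b + N) + p * (c + 2 * N)) / D * useq a b c p k.+2
      - p * (a + b + 2 * N + p - 1) / D * useq a b c p k.+1
      + p ^+ 2 / D * useq a b c p k.
Proof. by []. Qed.

Lemma vseqS p k : let N : C := k.+2%:R in let D := (N + 1) * (c + N) in
  vseq a b c p k.+3 =
      ((a + N) * (b + N) - p * (c + 2 * N)) / D * vseq a b c p k.+2
      + p * (a + b + 2 * N - p - 1) / D * vseq a b c p k.+1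
      + p ^+ 2 / D * vseq a b c p k.
Proof. by []. Qed.

Lemma useq_conv p n : useq a b c p n = cconv (mee p) h n.
Proof.
suff : forall n, [/\ useq a b c p n = cconv (mee p) h n,
   useq a b c p n.+1 = cconv (mee p) h n.+1 &
   useq a b c p n.+2 = cconv (mee p) h n.+2] by case/(_ n).
elim => [|k [IH0 IH1 IH2]].
  by split; rewrite ?f0 ?f1 ?f2.
split => //.
rewrite useqS IH0 IH1 IH2 /=.
set N : C := k.+2%:R.
have DN : (N + 1) * (c + N) != 0.
  rewrite mulf_neq0 //; last by apply: cN0.
  by rewrite /N natr1 pnatr_eq0.
have := f_rec p k; rewrite /= -/N => E.
clearbody N; move: (DN); rewrite mulf_eq0 negb_or => /andP[D1 D2].
apply: (mulfI DN); rewrite E; field; by rewrite D1 D2.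
Qed.

Lemma vseq_useq p n : vseq a b c p n = useq a b c (- p) n.
Proof.
suff : forall n, [/\ vseq a b c p n = useq a b c (-p) n,
   vseq a b c p n.+1 = useq a b c (-p) n.+1 &
   vseq a b c p n.+2 = useq a b c (-p) n.+2] by case/(_ n).
elim => [|k [IH0 IH1 IH2]].
  split => //=; rewrite sqrrN; ring.
split => //.
rewrite vseqS useqS IH0 IH1 IH2 /= sqrrN; ring.
Qed.
End Alg2.

Section An.
Variable R : realType.
Local Notation C := R[i].

Definition nrm (z : C) : R := Normc.normc z.

Lemma normE (z : C) : `|z| = (nrm z)%:C.
Proof. by []. Qed.

Lemma nrm_ge0 z : 0 <= nrm z.
Proof. by have := normr_ge0 z; rewrite normE lecE /= => /andP[]. Qed.

Lemma nrmM x y : nrm (x * y) = nrm x * nrm y.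
Proof. by apply: complexI; rewrite -normE normrM !normE rmorphM. Qed.

Lemma nrmD x y : nrm (x + y) <= nrm x + nrm y.
Proof. by rewrite -lecR rmorphD -!normE ler_normD. Qed.

Lemma nrmN x : nrm (- x) = nrm x.
Proof. by apply: complexI; rewrite -!normE normrN. Qed.

Lemma nrm_real (r : R) : nrm r%:C = `|r|.
Proof. by rewrite /nrm /= expr0n /= addr0 sqrtr_sqr. Qed.

Lemma nrmX x n : nrm (x ^+ n) = nrm x ^+ n.
Proof. by apply: complexI; rewrite -normE normrX normE rmorphXn. Qed.

Lemma nrmV x : nrm (x ^-1) = (nrm x)^-1.
Proof. by apply: complexI; rewrite -normE normfV normE fmorphV. Qed.

Lemma nrm_nat n : nrm n%:R = n%:R.
Proof. by apply: complexI; rewrite -normE normr_nat rmorph_nat. Qed.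

Lemma Re_le x : `|Re x| <= nrm x.
Proof.
case: x => u v; rewrite /nrm /= -sqrtr_sqr ler_sqrt ?lerDl ?sqr_ge0 //.
by rewrite addr_ge0 ?sqr_ge0.
Qed.

Lemma Im_le x : `|Im x| <= nrm x.
Proof.
case: x => u v; rewrite /nrm /= -sqrtr_sqr ler_sqrt ?lerDr ?sqr_ge0 //.
by rewrite addr_ge0 ?sqr_ge0.
Qed.

Lemma ltC_real (r : R) (e : C) : 0 < e -> r < Re e -> r%:C < e.
Proof.
case: e => u v; rewrite !ltcE /= => /andP[/eqP -> _] ->; by rewrite eqxx.
Qed.

Lemma dom0 (u : C ^nat) (g : R ^nat) :
  (forall n, `|u n| <= (g n)%:C) -> g @ \oo --> 0 -> u @ \oo --> 0.
Proof.
move=> ug g0; apply/cvgrPdist_lt => e e0.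
have e'0 : 0 < Re e by move: e0; rewrite ltcE => /andP[].
move/cvgrPdist_lt: g0 => /(_ _ e'0).
apply: filterS => n; rewrite sub0r normrN => gn.
rewrite sub0r normrN; apply: le_lt_trans (ug n) _.
apply: ltC_real => //; exact: le_lt_trans (ler_norm _) gn.
Qed.

Lemma emb_cvg (f : R ^nat) (x : R) : f @ \oo --> x ->
  (fun n => (f n)%:C) @ \oo --> x%:C.
Proof.
move=> fx; apply/cvgrPdist_lt => e e0.
have e'0 : 0 < Re e by move: e0; rewrite ltcE => /andP[].
move/cvgrPdist_lt: fx => /(_ _ e'0).
apply: filterS => n gn.
by rewrite -rmorphB normE nrm_real; apply: ltC_real.
Qed.


Lemma seriesC (u : C ^nat) n :
  series u n = (series (fun k => Re (u k)) n)%:C + 'i * (series (fun k => Im (u k)) n)%:C.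
Proof.
rewrite /series /= !rmorph_sum mulr_sumr -big_split; apply: eq_bigr => k _.
exact: complexE.
Qed.

Lemma abs_cvg (u : C ^nat) (s : R ^nat) :
  (forall n, nrm (u n) <= s n) -> cvgn (series s) -> cvgn (series u).
Proof.
move=> us cs.
have s0 n : 0 <= s n by exact: (le_trans (nrm_ge0 (u n)) (us n)).
have cRe : cvgn (series (fun k => Re (u k))).
  apply: normed_cvg; apply: (series_le_cvg _ s0) cs => n /=.
    exact: normr_ge0.
  exact: le_trans (Re_le _) (us n).
have cIm : cvgn (series (fun k => Im (u k))).
  apply: normed_cvg; apply: (series_le_cvg _ s0) cs => n /=.
    exact: normr_ge0.
  exact: le_trans (Im_le _) (us n).
apply/cvg_ex; exists ((limn (series (fun k => Re (u k))))%:C +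
  'i * (limn (series (fun k => Im (u k))))%:C).
rewrite (_ : series u = fun n => (series (fun k => Re (u k)) n)%:C +
   'i * (series (fun k => Im (u k)) n)%:C); last by apply: funext => n; exact: seriesC.
apply: cvgD; first exact: emb_cvg.
apply: cvgM; first exact: cvg_cst.
exact: emb_cvg.
Qed.

Lemma ratio_cvg (w : R ^nat) (r : R) (N : nat) : (forall n, 0 <= w n) ->
  0 < r -> r < 1 -> (forall n, (N <= n)%N -> w n.+1 <= r * w n) ->
  cvgn (series w).
Proof.
move=> w0 r0 r1 wr.
pose K := \sum_(i < N.+1) w i / r ^+ i.
have rX0 n : 0 < r ^+ n by rewrite exprn_gt0.
have K0 : 0 <= K by apply: sumr_ge0 => i _; rewrite divr_ge0 // ltW.
have small n : (n <= N)%N -> w n / r ^+ n <= K.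
  move=> nN; have nN' : (n < N.+1)%N by [].
  rewrite /K (bigD1 (Ordinal nN')) //= lerDl.
  by apply: sumr_ge0 => i _; rewrite divr_ge0 // ltW.
have big k : w (N + k)%N <= w N / r ^+ N * r ^+ (N + k).
  elim: k => [|k IH].
    by rewrite addn0 divfK // gt_eqF.
  rewrite addnS; apply: le_trans (wr _ (leq_addr _ _)) _.
  rewrite exprS mulrCA ler_pM2l //.
have bnd n : w n <= K * r ^+ n.
  have [nN|Nn] := leqP n N.
    rewrite -ler_pdivrMr //; exact: small.
  have -> : n = (N + (n - N))%N by rewrite subnKC // ltnW.
  apply: le_trans (big _) _; rewrite ler_pM2r //; exact: small.
apply: (series_le_cvg w0 _ bnd).
  by move=> n; rewrite mulr_ge0 // ltW.
have := @is_cvg_geometric_series R K r.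
by rewrite ger0_norm ?ltW //; apply.
Qed.
End An.

Arguments nrm {R}.
Arguments normE {R}.
Arguments nrm_ge0 {R}.
Arguments nrmM {R}.
Arguments nrmD {R}.
Arguments nrmN {R}.
Arguments nrm_real {R}.
Arguments nrmX {R}.
Arguments nrmV {R}.
Arguments nrm_nat {R}.
Arguments Re_le {R}.
Arguments Im_le {R}.
Arguments ltC_real {R}.
Arguments dom0 {R}.
Arguments emb_cvg {R}.
Arguments seriesC {R}.
Arguments abs_cvg {R}.
Arguments ratio_cvg {R}.

Section Cauchy.
Variable K : comPzRingType.
Definition cv (s t : nat -> K) n := \sum_(i < n.+1) s i * t (n - i)%N.


Lemma tri_eq (u v : K ^nat) n : series (cv u v) n =
  \sum_(0 <= i < n) u i * \sum_(0 <= j < n - i) v j.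
Proof.
elim: n => [|n IH]; first by rewrite seriesEnat /= !big_geq.
rewrite seriesSr IH big_nat_recr // subSnn big_nat1 /=.
have E : \sum_(0 <= i < n) u i * \sum_(0 <= j < n.+1 - i) v j =
   \sum_(0 <= i < n) (u i * \sum_(0 <= j < n - i) v j + u i * v (n - i)%N).
  apply: eq_big_nat => i /andP[_ iln]. rewrite subSn; last exact: ltnW.
  rewrite big_nat_recr; last exact: leq0n.
  by rewrite /= mulrDr.
rewrite E big_split /= -addrA /cv big_ord_recr /= subnn.
by rewrite [X in _ = _ + (X + _)]big_mkord.
Qed.

Lemma dif_eq (u v : K ^nat) n : series u n * series v n - series (cv u v) n =
  \sum_(0 <= i < n) u i * \sum_(n - i <= j < n) v j.
Proof.
rewrite tri_eq !seriesEnat /= mulr_suml -sumrB.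
apply: eq_bigr => i _; rewrite -mulrBr; congr (_ * _).
rewrite (@big_cat_nat _ _ _ (n - i) 0 n); [|exact: leq0n|exact: leq_subr].
by rewrite /= addrC addrK.
Qed.
End Cauchy.
Arguments cv {K}.

Section Cauchy2.
Variable R : realType.
Local Notation C := R[i].

Lemma sum_mono (F : R ^nat) m p : (forall i, 0 <= F i) -> (m <= p)%N ->
  \sum_(0 <= i < m) F i <= \sum_(0 <= i < p) F i.
Proof.
move=> F0 mp; rewrite (@big_cat_nat _ _ _ m 0 p); [|exact: leq0n|exact: mp].
rewrite /= lerDl.
by apply: sumr_ge0 => i _.
Qed.

Lemma tri_ge (u v : R ^nat) (n : nat) : (forall i, 0 <= u i) -> (forall i, 0 <= v i) ->
  series u (n %/ 2)%N * series v (n %/ 2)%N <= series (cv u v) n.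
Proof.
move=> u0 v0; set m := (n %/ 2)%N.
have m2 : (m + m <= n)%N by rewrite addnn -muln2 leq_trunc_div.
rewrite tri_eq !seriesEnat /= mulr_suml.
have T0 i : 0 <= u i * \sum_(0 <= j < n - i) v j.
  by rewrite mulr_ge0 // sumr_ge0.
apply: (@le_trans _ _ (\sum_(0 <= i < m) u i * \sum_(0 <= j < n - i) v j)); last first.
  apply: sum_mono => [i|]; first exact: T0.
  exact: (leq_trans (leq_addr _ _) m2).
rewrite [leRHS]big_nat_cond [leLHS]big_nat_cond.
apply: ler_sum => i /andP[/andP[_ im] _]; rewrite ler_wpM2l //.
apply: sum_mono => //; rewrite leq_subRL; last first.
  by apply: leq_trans (ltnW im) (leq_trans (leq_addr _ _) m2).
by apply: leq_trans m2; rewrite leq_add2r ltnW.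
Qed.

Lemma cauchy_prod (u v : C ^nat) :
  cvgn (series (fun n => nrm (u n))) -> cvgn (series (fun n => nrm (v n))) ->
  series (cv u v) @ \oo --> limn (series u) * limn (series v).
Proof.
move=> cu cv'.
have cu' := abs_cvg _ _ (fun n => lexx (nrm (u n))) cu.
have cv'' := abs_cvg _ _ (fun n => lexx (nrm (v n))) cv'.
set Ab := series (fun n => nrm (u n)); set Bb := series (fun n => nrm (v n)).
pose g n := Ab n * Bb n - Ab (n %/ 2)%N * Bb (n %/ 2)%N.
have bnd n : `|series u n * series v n - series (cv u v) n| <= (g n)%:C.
  rewrite dif_eq /g.
  apply: le_trans (ler_norm_sum _ _ _) _.
  apply: (@le_trans _ _ (\sum_(0 <= i < n) `|u i| * \sum_(n - i <= j < n) `|v j|)).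
    apply: ler_sum => i _; rewrite normrM ler_wpM2l //; exact: ler_norm_sum.
  have -> : \sum_(0 <= i < n) `|u i| * \sum_(n - i <= j < n) `|v j| =
     (\sum_(0 <= i < n) nrm (u i) * \sum_(n - i <= j < n) nrm (v j))%:C.
    rewrite rmorph_sum; apply: eq_bigr => i _; rewrite rmorphM rmorph_sum normE.
    by congr (_ * _); apply: eq_bigr => j _; rewrite normE.
  rewrite lecR -dif_eq lerD2l lerN2.
  by apply: tri_ge => i; exact: nrm_ge0.
have g0 : g @ \oo --> 0.
  have hAB : (fun n => Ab n * Bb n) @ \oo --> limn Ab * limn Bb.
    exact: cvgM.
  rewrite -(subrr (limn Ab * limn Bb)).
  apply: cvgB => //.
  have := cvg_comp (divn^~ 2%N) (fun n => Ab n * Bb n) (@cvg_divnr 2 isT) hAB. exact.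
have D0 := dom0 _ _ bnd g0.
have E : series (cv u v) = (fun n => series u n * series v n -
   (series u n * series v n - series (cv u v) n)).
  by apply: funext => n; rewrite opprB addrC subrK.
have H1 : (fun n => series u n * series v n) @ \oo --> limn (series u) * limn (series v).
  apply: cvgM; [exact: cu' | exact: cv''].
have H2 : (fun n => series u n * series v n -
   (series u n * series v n - series (cv u v) n)) @ \oo -->
   limn (series u) * limn (series v) - 0.
  apply: cvgB; [exact: H1 | exact: D0].
rewrite subr0 in H2.
rewrite E.
exact: H2.
Qed.
End Cauchy2.

Section Fin.
Variable R : realType.
Local Notation C := R[i].

Lemma exp_abs (w : C) : cvgn (series (fun n => nrm (w ^+ n / n`!%:R))).
Proof.
have -> : (fun n => nrm (w ^+ n / n`!%:R)) = exp_coeff (nrm w).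
  by apply: funext => n; rewrite /exp_coeff /= nrmM nrmX nrmV nrm_nat.
exact: is_cvg_series_exp_coeff.
Qed.

Lemma nrm_addl (n : nat) (x : C) : nrm (n%:R + x) <= n%:R + nrm x.
Proof. by apply: le_trans (nrmD _ _) _; rewrite nrm_nat. Qed.

Lemma nrm_cl (n : nat) (c : C) : n%:R - nrm c <= nrm (c + n%:R).
Proof.
rewrite lerBlDr; have := nrmD (c + n%:R) (- c).
by rewrite nrmN addrC addKr nrm_nat.
Qed.

Variables (a b c z : C).
Hypothesis hc : forall k : nat, c != - (k%:R).
Hypothesis hz : nrm z < 1.

Lemma hyp_abs : cvgn (series (fun n => nrm (hyp_coef a b c n * z ^+ n))).
Proof.
set rho := nrm z.
set al := nrm a; set be := nrm b; set ga := nrm c.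
have rho0 : 0 <= rho by apply: nrm_ge0.
have al0 : 0 <= al by apply: nrm_ge0.
have be0 : 0 <= be by apply: nrm_ge0.
have ga0 : 0 <= ga by apply: nrm_ge0.
have rho1 : rho < 1 by exact: hz.
set del := (1 - rho) / 2.
have del0 : 0 < del by rewrite /del; lra.
have r0 : 0 < rho + del by lra.
have r1 : rho + del < 1 by rewrite /del; lra.
set M := (rho + del) * ga + rho * (al + be) + rho * (al * be).
have M0 : 0 <= M.
  rewrite /M; apply: addr_ge0; [apply: addr_ge0|]; apply: mulr_ge0 => //; [lra|lra|exact: mulr_ge0].
have [N _ HN] := nbhs_infty_ger (2 * M / del + 1).
apply: (@ratio_cvg _ _ (rho + del) N) => //.
  by move=> n; apply: nrm_ge0.
move=> n /HN /= Hn.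
have q0 : 0 <= 2 * M / del by apply: divr_ge0; [lra | exact: ltW].
have n1 : 1 <= n%:R :> R by lra.
have nd : 2 * M <= n%:R * del.
  have : 2 * M / del <= n%:R - 1 by lra.
  rewrite ler_pdivrMr //; nra.
have key : rho * (nrm (n%:R + a) * nrm (n%:R + b)) <= (rho + del) * (n.+1%:R * nrm (c + n%:R)).
  apply: (@le_trans _ _ (rho * ((n%:R + al) * (n%:R + be)))).
    apply: ler_wpM2l => //; apply: ler_pM; try apply: nrm_ge0; exact: nrm_addl.
  apply: (@le_trans _ _ ((rho + del) * (n.+1%:R * (n%:R - ga)))); last first.
    apply: ler_wpM2l; first lra.
    apply: ler_wpM2l => //; exact: nrm_cl.
  rewrite -natr1.
  set x : R := n%:R.
  have p1 : 0 <= x * (x * del - 2 * M) by apply: mulr_ge0; lra.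
  have p2 : 0 <= (x - 1) * M by apply: mulr_ge0; lra.
  have p3 : 0 <= x * (rho + del) by apply: mulr_ge0; lra.
  have p4 : 0 <= x * (rho * (al * be)) by apply: mulr_ge0; [lra| apply: mulr_ge0 => //; exact: mulr_ge0].
  have p5 : 0 <= rho * (al + be) by apply: mulr_ge0; lra.
  rewrite /M in p1 p2; lra.
have E := @h_rec R a b c hc n.
rewrite (nrmM (hyp_coef a b c n.+1)) (nrmM (hyp_coef a b c n)) !nrmX exprS.
set H0 := nrm (hyp_coef a b c n); set H1 := nrm (hyp_coef a b c n.+1).
have H00 : 0 <= H0 by apply: nrm_ge0.
have E' : n.+1%:R * nrm (c + n%:R) * H1 = nrm (n%:R + a) * nrm (n%:R + b) * H0.
  by rewrite -(nrm_nat n.+1) -!nrmM E.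
have pos : 0 < n.+1%:R * nrm (c + n%:R).
  rewrite mulr_gt0 // ?ltr0Sn //.
  rewrite lt_neqAle nrm_ge0 andbT eq_sym; apply/eqP => /(congr1 (fun x : R => x%:C)).
  rewrite -normE => /eqP; rewrite normr_eq0 addr_eq0 (negPf (hc n)) //.
rewrite -(ler_pM2l pos).
have HX : 0 <= H0 * rho ^+ n by apply: mulr_ge0 => //; exact: exprn_ge0.
have K2 := ler_wpM2r HX key.
have e1 : n.+1%:R * nrm (c + n%:R) * (H1 * (rho * rho ^+ n)) =
   rho * (nrm (n%:R + a) * nrm (n%:R + b)) * (H0 * rho ^+ n).
  rewrite mulrA E'; ring.
rewrite e1; apply: le_trans K2 _; rewrite le_eqVlt; apply/orP; left; apply/eqP; ring.
Qed.
End Fin.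

Lemma conv_z (R : realType) (a b c z q w : R[i]) n : w = q * z ->
  cv (fun n => w ^+ n / n`!%:R) (fun n => hyp_coef a b c n * z ^+ n) n =
  cconv (mee q) (hyp_coef a b c) n * z ^+ n.
Proof.
move=> ->; rewrite /cv /cconv mulr_suml; apply: eq_bigr => i _.
have -> : z ^+ n = z ^+ i * z ^+ (n - i) by rewrite -exprD subnKC // -ltnS.
rewrite /mee exprMn; ring.
Qed.

Theorem theorem3p2 (R : realType) (a b c p : R[i])
  (hc : forall k : nat, c != - (k%:R)) (z : R[i]) (hz : `|z| < 1) :
  series (fun n => (useq a b c p n - vseq a b c p n) / 2 * z ^+ n) @ \oo -->
    csinh (p * z) * hypF a b c z.
Proof.
have hz' : nrm z < 1.
  by move: hz; rewrite normE -[1]/((1 : R)%:C) ltcR.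
pose U := fun n => (p * z) ^+ n / n`!%:R.
pose V := fun n => (- (p * z)) ^+ n / n`!%:R.
pose H := fun n => hyp_coef a b c n * z ^+ n.
have cU := @cauchy_prod R U H (@exp_abs R (p * z)) (@hyp_abs R a b c z hc hz').
have cV := @cauchy_prod R V H (@exp_abs R (- (p * z))) (@hyp_abs R a b c z hc hz').
have E : (fun n => (useq a b c p n - vseq a b c p n) / 2 * z ^+ n) =
   (fun n => 2^-1 * (cv U H n - cv V H n)).
  apply: funext => n.
  rewrite (@vseq_useq R a b c p n) (@useq_conv R a b c hc p n) (@useq_conv R a b c hc (- p) n).
  rewrite /U /V /H (@conv_z R a b c z p (p * z) n (erefl _)).
  rewrite (@conv_z R a b c z (- p) (- (p * z)) n (esym (mulNr p z))).
  ring.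
have E2 : series (fun n => 2^-1 * (cv U H n - cv V H n)) =
   (fun n => 2^-1 * (series (cv U H) n - series (cv V H) n)).
  apply: funext => n; rewrite /series /= -sumrB mulr_sumr; done.
rewrite E E2.
have -> : csinh (p * z) * hypF a b c z =
   2^-1 * (limn (series U) * limn (series H) - limn (series V) * limn (series H)).
  rewrite /csinh /hypF /cexp -/U -/V -/H; ring.
apply: cvgM; first exact: cvg_cst.
apply: cvgB; [exact: cU | exact: cV].
Qed.
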